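(* Let $R$ be a commutative ring with nonzero identity and $\delta$ an expansion of ideals of $R$ with $\delta(\{0\})=\{0\}$. Then $R$ is a field if and only if $R$ is a von Neumann regular ring and $\{0\}$ is a $\delta$-$n$-ideal of $R$.
   Context: An expansion of ideals of a ring $R$ is a map $\delta$ from the set of ideals of $R$ to itself such that $I\subseteq\delta(I)$ for every ideal $I$, and $\delta(I)\subseteq\delta(J)$ whenever $I\subseteq J$. $\sqrt{0}$ denotes the nilradical of $R$. Given an expansion $\delta$, a proper ideal $I$ of $R$ is a $\delta$-$n$-ideal if whenever $a,b\in R$ with $ab\in I$ and $a\notin\sqrt{0}$, then $b\in\delta(I)$. $R$ is von Neumann regular if for every $a\in R$ there is $x\in R$ with $a=a^2x$. *)

(* Defs.v *)
From mathcomp Require Import all_boot all_algebra.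
Set Implicit Arguments. Unset Strict Implicit. Unset Printing Implicit Defensive.
Import GRing.Theory.
Local Open Scope ring_scope.

Definition is_ideal (R : comNzRingType) (I : R -> Prop) : Prop :=
  [/\ I 0,
      (forall x y, I x -> I y -> I (x + y)),
      (forall x, I x -> I (- x)) &
      (forall r x, I x -> I (r * x))].

Definition subset_of (R : comNzRingType) (I J : R -> Prop) : Prop :=
  forall x, I x -> J x.

(* An expansion of ideals: maps ideals to ideals, extensive and monotone
   (only its behaviour on ideals matters). *)
Definition expansion (R : comNzRingType) (delta : (R -> Prop) -> (R -> Prop)) : Prop :=
  [/\ (forall I, is_ideal I -> is_ideal (delta I)),
      (forall I, is_ideal I -> subset_of I (delta I)) &
      (forall I J, is_ideal I -> is_ideal J -> subset_of I J ->
                   subset_of (delta I) (delta J))].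

Definition nilrad (R : comNzRingType) (a : R) : Prop := exists n : nat, a ^+ n = 0.

Definition zero_ideal (R : comNzRingType) : R -> Prop := fun x => x = 0.

Definition proper_ideal (R : comNzRingType) (I : R -> Prop) : Prop :=
  is_ideal I /\ exists x, ~ I x.

Definition delta_n_ideal (R : comNzRingType) (delta : (R -> Prop) -> (R -> Prop))
  (I : R -> Prop) : Prop :=
  proper_ideal I /\
  forall a b : R, I (a * b) -> ~ nilrad a -> delta I b.

Definition von_neumann_regular (R : comNzRingType) : Prop :=
  forall a : R, exists x : R, a = a ^+ 2 * x.

Definition is_field (R : comNzRingType) : Prop :=
  forall a : R, a != 0 -> exists b : R, a * b = 1.

(* Main.v *)
Require Import Defs.
From mathcomp Require Import all_boot all_algebra.
Local Open Scope ring_scope.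
From mathcomp Require Import ring.
Import GRing.Theory.

Lemma vnr_pow (R : comNzRingType) (a x : R) : a = a ^+ 2 * x ->
  forall k : nat, a = a ^+ k.+1 * x ^+ k.
Proof.
move=> H; elim=> [|k IH]; first by rewrite expr1 expr0 mulr1.
rewrite {1}IH exprS {1}H !exprS; ring.
Qed.

Theorem theorem2p10 (R : comNzRingType) (delta : (R -> Prop) -> (R -> Prop))
  (hdelta : expansion delta)
  (hdelta0 : forall x : R, delta (@zero_ideal R) x <-> x = 0) :
  is_field R <-> (von_neumann_regular R /\ delta_n_ideal delta (@zero_ideal R)).
Proof.
split.
- move=> hF; split.
  + move=> a; have [->|a0] := eqVneq a 0; first by exists 0; rewrite mulr0.
    have [b hb] := hF a a0; exists b.
    by rewrite expr2 -mulrA hb mulr1.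
  + split.
    * split; last by exists 1; rewrite /zero_ideal; apply/eqP; exact: oner_neq0.
      rewrite /is_ideal /zero_ideal; split.
      - by [].
      - by move=> x y -> ->; rewrite addr0.
      - by move=> x ->; rewrite oppr0.
      - by move=> r x ->; rewrite mulr0.
    * move=> a b hab hna; apply/hdelta0.
      have a0 : a != 0.
        apply/eqP => a0; apply: hna; exists 1%N; by rewrite expr1.
      have [c hc] := hF a a0.
      by rewrite -[b]mul1r -hc mulrC mulrA [b * a]mulrC [a * b]hab mul0r.
- move=> [hV [_ hD]] a a0.
  have [x hx] := hV a.
  exists x.
  have na : ~ nilrad a.
    move=> [n hn].
    move: a0; rewrite (@vnr_pow R a x hx n) exprS hn mulr0 mul0r.
    by rewrite eqxx.
  have h0 : zero_ideal (a * (1 - a * x)).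
    rewrite /zero_ideal mulrBr mulr1 mulrA -expr2 -hx; exact: subrr.
  have := hD _ _ h0 na; move/hdelta0 => /eqP.
  by rewrite subr_eq0 => /eqP <-.
Qed.
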